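(* Assume the Lipschitz condition on $f_t,r_t$. Then the operator $\mathcal{B}^{\mathrm{RQE}}_{\mathrm{prop}}$ is Lipschitz: there is a constant $K_{\mathrm{prop}}>0$ such that for all $\pi_a,\pi_b\in\Pi$, $d_{\mathcal{S}}(\mathcal{B}^{\mathrm{RQE}}_{\mathrm{prop}}(\pi_a),\mathcal{B}^{\mathrm{RQE}}_{\mathrm{prop}}(\pi_b))\le K_{\mathrm{prop}}\,d_\Pi(\pi_a,\pi_b)$.
   Context: Let $\mathcal{X},\mathcal{U}$ be finite nonempty sets and $T\ge1$. $\mathcal{P}(E)$ is the set of probability vectors on finite $E$ and $d_{TV}(\mu,\mu')=\frac12\|\mu-\mu'\|_1$. For $t\in\{0,\dots,T-1\}$: kernels $f_t(x'\mid x,u,\mu)$ (a distribution over $x'$ for each $x,u,\mu$) and rewards $r_t:\mathcal{X}\times\mathcal{U}\times\mathcal{P}(\mathcal{X})\to[-R_{\max},R_{\max}]$ with $\sum_{x'}|f_t(x'\mid x,u,\mu)-f_t(x'\mid x,u,\mu')|\le L_fd_{TV}(\mu,\mu')$ and $|r_t(x,u,\mu)-r_t(x,u,\mu')|\le L_rd_{TV}(\mu,\mu')$, $L_f,L_r>0$. A policy is $\pi=(\pi_0,\dots,\pi_{T-1})$ with $\pi_t(\cdot\mid x)\in\mathcal{P}(\mathcal{U})$; $\Pi$ is the set of policies and $d_\Pi(\pi,\pi')=\max_{x,t<T}d_{TV}(\pi_t(\cdot\mid x),\pi'_t(\cdot\mid x))$. Given $\pi$ and $\mu_0$, the mean-field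 flow satisfies $\mu_{t+1}(x')=\sum_x\sum_uf_t(x'\mid x,u,\mu_t)\pi_t(u\mid x)\mu_t(x)$. Given a finite set $\mathbb{M}=\{\mu_0^1,\dots,\mu_0^K\}\subset\mathcal{P}(\mathcal{X})$, $\mathcal{B}^{\mathrm{RQE}}_{\mathrm{prop}}(\pi)=\{\mu^1,\dots,\mu^K\}$ where $\mu^k$ is the flow generated by $\pi$ from $\mu_0^k$; for two such sets, $d_{\mathcal{S}}(\mathcal{S}^1,\mathcal{S}^2)=\max_{k\le K,\,t<T}d_{TV}(\mu^{1,k}_t,\mu^{2,k}_t)$. *)

(* Defs.v *)
From mathcomp Require Import all_boot all_order all_algebra.
Set Implicit Arguments. Unset Strict Implicit. Unset Printing Implicit Defensive.
Import Order.TTheory GRing.Theory Num.Theory.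
Local Open Scope ring_scope.

Section MFG.
Variable R : realFieldType.

Definition is_prob (E : finType) (mu : {ffun E -> R}) : Prop :=
  (forall e, 0 <= mu e) /\ \sum_(e : E) mu e = 1.

Definition dTV (E : finType) (mu nu : {ffun E -> R}) : R :=
  2^-1 * \sum_(e : E) `|mu e - nu e|.

Variables (X U : finType).

(* kernel: f t x u mu is a (vector) distribution over x' *)
Definition kernel := nat -> X -> U -> {ffun X -> R} -> {ffun X -> R}.
Definition reward := nat -> X -> U -> {ffun X -> R} -> R.
Definition policy := nat -> X -> {ffun U -> R}.

Definition is_policy (T : nat) (pi : policy) : Prop :=
  forall t x, (t < T)%N -> is_prob (pi t x).

Definition dPi (T : nat) (pi pi' : policy) : R :=
  \big[Num.max/0]_(t < T) \big[Num.max/0]_(x : X) dTV (pi t x) (pi' t x).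

Fixpoint flow (f : kernel) (pi : policy) (mu0 : {ffun X -> R}) (t : nat)
  : {ffun X -> R} :=
  match t with
  | 0 => mu0
  | s.+1 =>
      let mu := flow f pi mu0 s in
      [ffun x' => \sum_(x : X) \sum_(u : U) f s x u mu x' * pi s x u * mu x]
  end.

(* B_prop^RQE(pi) = {mu^1, ..., mu^K}, mu^k the flow from mu_0^k *)
Definition Bprop (K : nat) (f : kernel) (M : 'I_K -> {ffun X -> R})
  (pi : policy) : 'I_K -> nat -> {ffun X -> R} :=
  fun k => flow f pi (M k).

Definition dS (K T : nat) (S1 S2 : 'I_K -> nat -> {ffun X -> R}) : R :=
  \big[Num.max/0]_(k < K) \big[Num.max/0]_(t < T) dTV (S1 k t) (S2 k t).

End MFG.

(* Main.v *)
Require Import Defs.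
From mathcomp Require Import all_boot all_order all_algebra.
From mathcomp Require Import ring lra.
Import Order.TTheory GRing.Theory Num.Theory.
Local Open Scope ring_scope.

Lemma step_bound {R : realFieldType} {X U : finType}
  {Fa Fb : X -> U -> {ffun X -> R}} {Pa Pb : X -> {ffun U -> R}}
  {ma mb : {ffun X -> R} } {L d : R}
  (hFa : forall x u, is_prob (Fa x u)) (hFb : forall x u, is_prob (Fb x u))
  (hPa : forall x, is_prob (Pa x)) (hPb : forall x, is_prob (Pb x))
  (hma : is_prob ma) (hmb : is_prob mb)
  (hL : forall x u, \sum_x' `|Fa x u x' - Fb x u x'| <= L * dTV ma mb)
  (hd : forall x, dTV (Pa x) (Pb x) <= d) :
  dTV [ffun x' => \sum_x \sum_u Fa x u x' * Pa x u * ma x]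
      [ffun x' => \sum_x \sum_u Fb x u x' * Pb x u * mb x]
  <= (L + 2) / 2 * dTV ma mb + d.
Proof.
set del := dTV ma mb.
pose G x u x' := `|Fa x u x' - Fb x u x'| * Pa x u * ma x
   + Fb x u x' * `|Pa x u - Pb x u| * ma x + Fb x u x' * Pb x u * `|ma x - mb x|.
have E1 : forall x', `|[ffun x' => \sum_x \sum_u Fa x u x' * Pa x u * ma x] x'
     - [ffun x' => \sum_x \sum_u Fb x u x' * Pb x u * mb x] x'|
     <= \sum_x \sum_u G x u x'.
  move=> x'; rewrite !ffunE -sumrB.
  apply: le_trans (ler_norm_sum _ _ _) _; apply: ler_sum => x _.
  rewrite -sumrB; apply: le_trans (ler_norm_sum _ _ _) _; apply: ler_sum => u _.
  have -> : Fa x u x' * Pa x u * ma x - Fb x u x' * Pb x u * mb x =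
     (Fa x u x' - Fb x u x') * Pa x u * ma x + Fb x u x' * (Pa x u - Pb x u) * ma x
     + Fb x u x' * Pb x u * (ma x - mb x) by ring.
  apply: le_trans (ler_normD _ _) _; rewrite /G lerD //.
    apply: le_trans (ler_normD _ _) _; rewrite lerD //.
      by rewrite !normrM (ger0_norm ((hPa x).1 u)) (ger0_norm (hma.1 x)).
    by rewrite !normrM (ger0_norm ((hFb x u).1 x')) (ger0_norm (hma.1 x)).
  by rewrite !normrM (ger0_norm ((hFb x u).1 x')) (ger0_norm ((hPb x).1 u)).
have E2 : forall x u, \sum_x' G x u x' <=
    Pa x u * ma x * (L * del) + `|Pa x u - Pb x u| * ma x + Pb x u * `|ma x - mb x|.
  move=> x u; rewrite /G !big_split /=.
  rewrite -!mulr_suml (hFb x u).2 !mul1r.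
  rewrite lerD2r lerD2r -mulrA mulrC.
  by apply: ler_wpM2l; [apply: mulr_ge0; [exact: (hPa x).1 | exact: hma.1] | exact: hL].
have E3 : forall x, \sum_u \sum_x' G x u x' <=
    ma x * (L * del) + ma x * (2 * d) + `|ma x - mb x|.
  move=> x; apply: le_trans (ler_sum _ (fun u _ => E2 x u)) _.
  rewrite !big_split /= -!mulr_suml (hPb x).2 mul1r (hPa x).2 mul1r.
  rewrite lerD2r lerD2l mulrC ler_wpM2l //; first exact: hma.1.
  have := hd x; rewrite /dTV; lra.
rewrite /dTV.
have E4 : \sum_x' `|[ffun x' => \sum_x \sum_u Fa x u x' * Pa x u * ma x] x'
     - [ffun x' => \sum_x \sum_u Fb x u x' * Pb x u * mb x] x'|
     <= (L * del) + 2 * d + 2 * del.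
  apply: le_trans (ler_sum _ (fun x' _ => E1 x')) _.
  rewrite exchange_big /=.
  under eq_bigr => x _ do rewrite exchange_big /=.
  apply: le_trans (ler_sum _ (fun x _ => E3 x)) _.
  rewrite !big_split /= -!mulr_suml hma.2 !mul1r.
  by rewrite /del /dTV; lra.
move: E4; lra.
Qed.


Lemma flow_prob {R : realFieldType} {X U : finType} {T : nat}
  {f : kernel R X U}
  (hfprob : forall t x u mu, (t < T)%N -> is_prob mu -> is_prob (f t x u mu))
  {pol : policy R X U} {mu0 : {ffun X -> R} } :
  is_policy T pol -> is_prob mu0 ->
  forall t, (t <= T)%N -> is_prob (flow f pol mu0 t).
Proof.
move=> hpol hmu; elim=> [//|s IH] hs /=.
have hs' : (s < T)%N by exact: hs.
have hm := IH (ltnW hs).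
split.
  move=> x'; rewrite ffunE; apply: sumr_ge0 => x _; apply: sumr_ge0 => u _.
  apply: mulr_ge0; [apply: mulr_ge0|exact: hm.1].
    exact: (hfprob _ _ _ _ hs' hm).1.
  exact: (hpol _ _ hs').1.
under eq_bigr => x' _ do rewrite ffunE.
rewrite exchange_big /=.
rewrite -hm.2; apply: eq_bigr => x _.
rewrite exchange_big /=.
transitivity (\sum_u pol s x u * flow f pol mu0 s x).
  apply: eq_bigr => u _.
  by rewrite -!mulr_suml (hfprob _ x u _ hs' hm).2 mul1r.
by rewrite -mulr_suml (hpol s x hs').2 mul1r.
Qed.


Fixpoint Aseq (R : realFieldType) (c : R) (t : nat) : R :=
  match t with 0 => 0 | s.+1 => c * Aseq R c s + 1 end.
Arguments Aseq {R}.

Lemma Aseq_ge0 {R : realFieldType} (c : R) : 0 <= c -> forall t, 0 <= Aseq c t.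
Proof.
move=> hc; elim=> [//|s IH] /=.
by apply: addr_ge0 => //; apply: mulr_ge0.
Qed.

Theorem lemma5 (R : realFieldType) (X U : finType) (x0 : X) (u0 : U)
  (T : nat) (hT : (1 <= T)%N) (Rmax Lf Lr : R)
  (f : kernel R X U) (r : reward R X U)
  (hLf : 0 < Lf) (hLr : 0 < Lr)
  (hfprob : forall t x u mu, (t < T)%N -> is_prob mu -> is_prob (f t x u mu))
  (hrbd : forall t x u mu, (t < T)%N -> is_prob mu ->
     `|r t x u mu| <= Rmax)
  (hfLip : forall t x u mu mu', (t < T)%N -> is_prob mu -> is_prob mu' ->
     \sum_(x' : X) `|f t x u mu x' - f t x u mu' x'| <= Lf * dTV mu mu')
  (hrLip : forall t x u mu mu', (t < T)%N -> is_prob mu -> is_prob mu' ->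
     `|r t x u mu - r t x u mu'| <= Lr * dTV mu mu')
  (K : nat) (M : 'I_K -> {ffun X -> R}) (hM : forall k, is_prob (M k)) :
  exists Kprop : R, 0 < Kprop /\
    forall pia pib : policy R X U, is_policy T pia -> is_policy T pib ->
      dS T (Bprop f M pia) (Bprop f M pib) <= Kprop * dPi T pia pib.
Proof.
set c := (Lf + 2) / 2.
have hc : 0 <= c by rewrite /c; lra.
have hS : 0 <= \sum_(t < T) Aseq c t by apply: sumr_ge0 => t _; exact: Aseq_ge0.
exists (1 + \sum_(t < T) Aseq c t); split.
  have := hS; lra.
move=> pia pib ha hb.
set d := dPi T pia pib.
have hd0 : 0 <= d by apply: bigmax_ge_id.
have key : forall k t, (t < T)%N ->
    dTV (flow f pia (M k) t) (flow f pib (M k) t) <= Aseq c t * d.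
  move=> k; elim=> [|s IH] hs /=.
    rewrite mul0r /dTV; under eq_bigr => x _ do rewrite subrr normr0.
    by rewrite big1 // mulr0.
  have hs' : (s < T)%N by apply: ltnW.
  have hma := flow_prob hfprob ha (hM k) s (ltnW hs').
  have hmb := flow_prob hfprob hb (hM k) s (ltnW hs').
  apply: le_trans.
    apply: (step_bound (L := Lf) (d := d)).
    - by move=> x u; exact: hfprob.
    - by move=> x u; exact: hfprob.
    - by move=> x; exact: ha.
    - by move=> x; exact: hb.
    - exact: hma.
    - exact: hmb.
    - by move=> x u; exact: hfLip.
    - move=> x; rewrite /d /dPi.
      apply: le_trans (le_bigmax _ _ (Ordinal hs')).
      exact: (le_bigmax _ (fun x => dTV (pia s x) (pib s x)) x).
  rewrite -/c mulrDl mul1r lerD2r mulrA.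
  have h := ler_wpM2l hc (IH hs'); rewrite /dTV in h.
  by move: h; rewrite !mulrA.
rewrite /dS; apply: bigmax_le; first by apply: mulr_ge0 => //; have := hS; lra.
move=> k _; apply: bigmax_le; first by apply: mulr_ge0 => //; have := hS; lra.
move=> t _; rewrite /Bprop.
apply: le_trans (key k t (ltn_ord t)) _.
apply: ler_wpM2r => //.
rewrite (bigD1 t) //=.
have : 0 <= \sum_(i < T | i != t) Aseq c i by apply: sumr_ge0 => i _; exact: Aseq_ge0.
by move=> hS'; rewrite addrCA lerDl addr_ge0.
Qed.
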